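(* Let $\mathcal{P}\subseteq[0,1]^n$ be a polytope with vertex set $V$. For each $v\in V$ let $P_v$ be a non-zero Bernstein polynomial in $n$ variables, and suppose that $$\sum_{v\in V}P_v(x)(v-x)=0\quad\text{for all }x\in\mathcal{P}.$$ Then the Bernoulli race over the Bernstein polynomials $\{P_v\}_{v\in V}$ is a Bernoulli factory for $\mathcal{P}$. If moreover $\sum_{v\in V}P_v(x)>0$ for all $x\in\mathcal{P}$, then it is a strong Bernoulli factory for $\mathcal{P}$.
   Context: A Bernstein monomial is $\prod_{i=1}^n x_i^{a_i}(1-x_i)^{b_i}$ with nonnegative integers $a_i,b_i$; a Bernstein polynomial is a finite combination $\sum_j c_jM_j(x)$ of Bernstein monomials with positive coefficients $c_j$. A Bernoulli factory with output set $V$ (for inputs $x\in[0,1]^n$) is a (possibly infinite) rooted binary tree whose internal nodes are labeled by an index $i\in[n]$ or a known constant $c\in(0,1)$ and whose leaves are labeled by elements of $V$; on input $x$ one walks from the root, at a node labeled $i$ flipping a fresh independent coin that is $1$ with probability $x_i$ (an $x_i$-coin), at a node labeled $c$ a fresh coin of bias $c$, following the edge labeled by the outcome, and outputs the label of the leaf reached; $\mathcal{F}(x)$ is the output ($\emptyset$ if no leaf is reached). Vertices are viewed as vectors in $\mathbb{R}^n$. A Bernoulli factory for $\mathcal{P}$ is such a factory with output set $V$ that terminates almost surely (i.e. $\Pr[\mathcal{F}(x)=\emptyset]=0$) and satisfies $\mathbb{E}[\mathcal{F}(x)]=x$ for all $x\in\mathcal{P}\cap(0,1)^n$; it is a strong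 Bernoulli factory for $\mathcal{P}$ if it terminates almost surely and satisfies $\mathbb{E}[\mathcal{F}(x)]=x$ for all $x\in\mathcal{P}$. The Bernoulli race over Bernstein polynomials $\{P_v\}_{v\in V}$ is the following factory: fix a constant $C\ge1$ at least the sum of the coefficients of every $P_v$. In each round, pick $v\in V$ uniformly at random; writing $P_v=\sum_j c_jM_j$, select monomial $M_j$ with probability $c_j/C$ (with the remaining probability select none, which counts as failure); if $M_j=\prod_i x_i^{a_i}(1-x_i)^{b_i}$ is selected, flip the $x_i$-coin $a_i+b_i$ times for each $i$, and declare success iff for every $i$ the first $a_i$ flips are $1$ and the next $b_i$ flips are $0$. On success output $v$; otherwise start a new round. *)

(* Defs.v *)
From HB Require Import structures.
From mathcomp Require Import all_boot all_order all_algebra.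
From mathcomp Require Import all_classical all_reals all_analysis.
Set Implicit Arguments. Unset Strict Implicit. Unset Printing Implicit Defensive.
Import Order.TTheory GRing.Theory Num.Theory.
Import numFieldNormedType.Exports.
Local Open Scope ring_scope.

(* Points of R^n are row vectors 'rV[R]_n;
   the i-th coordinate of x is x ord0 i. *)

Section Bernstein.
Variables (R : realType) (n : nat).

(* A Bernstein monomial prod_i x_i^(a_i) (1-x_i)^(b_i), given by (a, b). *)
Definition bmono := ({ffun 'I_n -> nat} * {ffun 'I_n -> nat})%type.

Definition bmono_eval (m : bmono) (x : 'rV[R]_n) : R :=
  \prod_(i < n) (x ord0 i ^+ m.1 i * (1 - x ord0 i) ^+ m.2 i).

Definition bpoly := seq (R * bmono).

Definition is_bernstein (P : bpoly) : Prop := forall t, t \in P -> 0 < t.1.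

Definition bpoly_eval (P : bpoly) (x : 'rV[R]_n) : R :=
  \sum_(t <- P) t.1 * bmono_eval t.2 x.

Definition bpoly_nonzero (P : bpoly) : Prop :=
  exists x : 'rV[R]_n, bpoly_eval P x != 0.

Definition bcoef_sum (P : bpoly) : R := \sum_(t <- P) t.1.

Definition in_hull (V : seq 'rV[R]_n) (x : 'rV[R]_n) : Prop :=
  exists w : 'I_(size V) -> R,
    (forall i, 0 <= w i) /\ \sum_(i < size V) w i = 1 /\
    x = \sum_(i < size V) w i *: V`_i.

(* V is the vertex set of the polytope conv(V): duplicate free, and no
   element of V lies in the convex hull of the other elements. *)
Definition is_vertex_set (V : seq 'rV[R]_n) : Prop :=
  uniq V /\ forall v, v \in V -> ~ in_hull (rem v V) v.

Definition in_unit_cube (x : 'rV[R]_n) : Prop := forall i, 0 <= x ord0 i <= 1.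
Definition in_open_cube (x : 'rV[R]_n) : Prop := forall i, 0 < x ord0 i < 1.

(* Probability that a single round succeeds and outputs v:
   v is picked with probability 1/|V|, monomial M_j of P_v with probability
   c_j/C, and the coin test for M_j = prod x_i^a_i (1-x_i)^b_i succeeds with
   probability prod_i x_i^a_i (1-x_i)^b_i (independent fresh coin flips). *)
Definition race_round (V : seq 'rV[R]_n) (Pv : 'rV[R]_n -> bpoly) (C : R)
    (x v : 'rV[R]_n) : R :=
  (size V)%:R^-1 * \sum_(t <- Pv v) (t.1 / C) * bmono_eval t.2 x.

Definition race_fail (V : seq 'rV[R]_n) (Pv : 'rV[R]_n -> bpoly) (C : R)
    (x : 'rV[R]_n) : R :=
  1 - \sum_(v <- V) race_round V Pv C x v.

(* Pr[F(x) = v]: the first k rounds fail and round k+1 outputs v, summed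
   over k >= 0 (rounds are independent). *)
Definition race_out (V : seq 'rV[R]_n) (Pv : 'rV[R]_n -> bpoly) (C : R)
    (x v : 'rV[R]_n) : R :=
  limn (fun N : nat =>
    \sum_(k < N) (race_fail V Pv C x ^+ k * race_round V Pv C x v)).

(* Pr[F(x) = emptyset]: the limit of Pr[the first k rounds all fail]. *)
Definition race_noout (V : seq 'rV[R]_n) (Pv : 'rV[R]_n -> bpoly) (C : R)
    (x : 'rV[R]_n) : R :=
  limn (fun k : nat => race_fail V Pv C x ^+ k).

(* out x v = Pr[F(x) = v], noout x = Pr[F(x) = emptyset]. *)

(* Bernoulli factory for conv(V): terminates a.s. and E[F(x)] = x for all
   x in P ∩ (0,1)^n. *)
Definition is_bernoulli_factory (V : seq 'rV[R]_n)
    (out : 'rV[R]_n -> 'rV[R]_n -> R) (noout : 'rV[R]_n -> R) : Prop :=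
  forall x, in_hull V x -> in_open_cube x ->
    noout x = 0 /\ \sum_(v <- V) out x v *: v = x.

Definition is_strong_bernoulli_factory (V : seq 'rV[R]_n)
    (out : 'rV[R]_n -> 'rV[R]_n -> R) (noout : 'rV[R]_n -> R) : Prop :=
  forall x, in_hull V x ->
    noout x = 0 /\ \sum_(v <- V) out x v *: v = x.

End Bernstein.

(* Main.v *)
Require Import Defs.
From HB Require Import structures.
From mathcomp Require Import all_boot all_order all_algebra.
From mathcomp Require Import all_classical all_reals all_analysis.
From mathcomp Require Import ring lra.
Import Order.TTheory GRing.Theory Num.Theory.
Import numFieldNormedType.Exports.
Local Open Scope ring_scope.

Section S.
Variables (R : realType) (n : nat).

Lemma bmono_01 (m : bmono n) (x : 'rV[R]_n) : in_unit_cube x ->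
  0 <= bmono_eval m x <= 1.
Proof.
move=> hx; rewrite /bmono_eval; apply/andP; split.
  apply: prodr_ge0 => i _; have /andP[h0 h1] := hx i.
  by apply: mulr_ge0; apply: exprn_ge0; rewrite ?subr_ge0.
apply: prodr_ile1 => i _; have /andP[h0 h1] := hx i.
apply/andP; split.
  by apply: mulr_ge0; apply: exprn_ge0; rewrite ?subr_ge0.
apply: mulr_ile1; try apply: exprn_ge0; rewrite ?subr_ge0 //;
  apply: exprn_ile1; rewrite ?subr_ge0 // ?lerBlDr ?lerDl //.
Qed.

Lemma bpoly_ge0 (P : bpoly R n) x : is_bernstein P -> in_unit_cube x ->
  0 <= bpoly_eval P x.
Proof.
move=> hP hx; rewrite /bpoly_eval big_seq; apply: sumr_ge0 => t tP.
apply: mulr_ge0; first exact: ltW (hP t tP).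
by case/andP: (bmono_01 t.2 x hx).
Qed.

Lemma bpoly_leC (P : bpoly R n) x : is_bernstein P -> in_unit_cube x ->
  bpoly_eval P x <= bcoef_sum P.
Proof.
move=> hP hx; rewrite /bpoly_eval /bcoef_sum !big_seq; apply: ler_sum => t tP.
case/andP: (bmono_01 t.2 x hx) => _ h1.
by apply: ler_piMr => //; exact: ltW (hP t tP).
Qed.

Lemma sum_le_size (s : seq 'rV[R]_n) (F : 'rV[R]_n -> R) (C : R) :
  (forall v, v \in s -> F v <= C) -> \sum_(v <- s) F v <= (size s)%:R * C.
Proof.
elim: s => [|a s IH] h; first by rewrite big_nil mul0r.
rewrite big_cons /= mulrSr mulrDl mul1r addrC lerD //.
  by apply: IH => v vs; apply: h; rewrite inE vs orbT.
by apply: h; rewrite inE eqxx.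
Qed.

Lemma hull_cube (V : seq 'rV[R]_n) x : (forall v, v \in V -> in_unit_cube v) ->
  in_hull V x -> in_unit_cube x.
Proof.
move=> hV [w [w0 [w1 ->]]] i.
rewrite summxE; apply/andP; split.
  apply: sumr_ge0 => j _; rewrite mxE; apply: mulr_ge0 => //.
  by case/andP: (hV _ (mem_nth 0 (ltn_ord j)) i).
rewrite -w1; apply: ler_sum => j _; rewrite mxE.
apply: ler_piMr => //; by case/andP: (hV _ (mem_nth 0 (ltn_ord j)) i).
Qed.


Lemma key (V : seq 'rV[R]_n) (Pv : 'rV[R]_n -> bpoly R n) (C : R) x :
  (forall v, v \in V -> is_bernstein (Pv v)) ->
  \sum_(v <- V) bpoly_eval (Pv v) x *: (v - x) = 0 ->
  1 <= C -> (forall v, v \in V -> bcoef_sum (Pv v) <= C) ->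
  in_unit_cube x -> 0 < \sum_(v <- V) bpoly_eval (Pv v) x ->
  race_noout V Pv C x = 0 /\ \sum_(v <- V) race_out V Pv C x v *: v = x.
Proof.
move=> hB hid hC hcs hx hS.
set S := \sum_(v <- V) bpoly_eval (Pv v) x in hS.
set N : R := (size V)%:R.
have C0 : 0 < C by apply: lt_le_trans hC.
have N0 : 0 < N.
  rewrite /N ltr0n; move: hS; rewrite /S; case: (V) => //.
  by rewrite big_nil ltxx.
have hr : forall v, race_round V Pv C x v = N^-1 * (bpoly_eval (Pv v) x / C).
  move=> v; rewrite /race_round /bpoly_eval mulr_suml; congr (_ * _).
  by apply: eq_bigr => t _; rewrite mulrAC.
have hq : \sum_(v <- V) race_round V Pv C x v = N^-1 * (S / C).
  by rewrite (eq_bigr _ (fun v _ => hr v)) -mulr_sumr -mulr_suml.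
have SK : S <= N * C.
  apply: sum_le_size => v vV; apply: le_trans (hcs v vV).
  exact: bpoly_leC (hB v vV) hx.
set q := N^-1 * (S / C).
have q0 : 0 < q by apply: mulr_gt0; rewrite ?invr_gt0 // divr_gt0.
have q1 : q <= 1.
  have -> : q = S / (N * C) by rewrite /q invfM mulrCA mulrA.
  by rewrite ler_pdivrMr ?mul1r // mulr_gt0.
have hf : race_fail V Pv C x = 1 - q by rewrite /race_fail hq.
have af : `|1 - q| < 1.
  by rewrite ger0_norm ?subr_ge0 // ltrBlDr ltrDl.
split.
  rewrite /race_noout hf; apply: cvg_lim => //; exact: cvg_expr.
have hout : forall v, race_out V Pv C x v = bpoly_eval (Pv v) x / S.
  move=> v; rewrite /race_out hf.
  have -> : (fun N0 : nat => \sum_(k < N0) ((1 - q) ^+ k * race_round V Pv C x v))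
     = series (geometric (race_round V Pv C x v) (1 - q)).
    apply: funext => m; rewrite /series /= big_mkord; apply: eq_bigr => k _.
    by rewrite /geometric mulrC.
  rewrite (cvg_lim _ (@cvg_geometric_series R (race_round V Pv C x v) _ af)) // hr opprB addrC subrK /q.
  have S0 : S != 0 by rewrite gt_eqF.
  field; rewrite ?gt_eqF //; apply/and3P; split => //; rewrite gt_eqF //.
rewrite (eq_bigr _ (fun v _ => congr1 (fun r => r *: v) (hout v))).
have : \sum_(v <- V) bpoly_eval (Pv v) x *: v = S *: x.
  move: hid; rewrite (eq_bigr _ (fun v _ => scalerBr _ v x)) sumrB -scaler_suml.
  by move/eqP; rewrite subr_eq0 => /eqP.
under eq_bigr do rewrite mulrC -scalerA.
rewrite -scaler_sumr => ->; rewrite scalerA mulVf ?scale1r // gt_eqF //.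
Qed.


Lemma bpoly_gt0 (P : bpoly R n) x : is_bernstein P -> bpoly_nonzero P ->
  in_open_cube x -> 0 < bpoly_eval P x.
Proof.
case: P => [|t P] hP [y hy] hx; first by move: hy; rewrite /bpoly_eval big_nil eqxx.
have hx' : in_unit_cube x.
  by move=> i; case/andP: (hx i) => a b; rewrite !ltW.
rewrite /bpoly_eval big_cons ltr_pwDl //.
  apply: mulr_gt0; first by apply: hP; rewrite inE eqxx.
  rewrite /bmono_eval; apply: prodr_gt0 => i _; case/andP: (hx i) => a b.
  by apply: mulr_gt0; apply: exprn_gt0; rewrite ?subr_gt0.
have hP' : is_bernstein P by move=> s sP; apply: hP; rewrite inE sP orbT.
exact: bpoly_ge0.
Qed.

End S.

Theorem theorem2p8 (R : realType) (n : nat) (V : seq 'rV[R]_n)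
    (Pv : 'rV[R]_n -> bpoly R n) (C : R) :
  is_vertex_set V ->
  (forall v, v \in V -> in_unit_cube v) ->
  (forall v, v \in V -> is_bernstein (Pv v) /\ bpoly_nonzero (Pv v)) ->
  (forall x, in_hull V x -> \sum_(v <- V) bpoly_eval (Pv v) x *: (v - x) = 0) ->
  1 <= C -> (forall v, v \in V -> bcoef_sum (Pv v) <= C) ->
  is_bernoulli_factory V (race_out V Pv C) (race_noout V Pv C) /\
  ((forall x, in_hull V x -> 0 < \sum_(v <- V) bpoly_eval (Pv v) x) ->
   is_strong_bernoulli_factory V (race_out V Pv C) (race_noout V Pv C)).
Proof.
move=> _ hV hP hid hC hcs.
have hB : forall v, v \in V -> is_bernstein (Pv v) by move=> v /hP [].
split; last first.
  move=> hS x hx; apply: key => //; [exact: hid | exact: hull_cube hV hx | exact: hS].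
move=> x hx ho; apply: key => //; [exact: hid | exact: hull_cube hV hx |].
have : (0 < size V)%N.
  case: hx => w [_ [w1 _]]; move: w1; case: (size V) w => // w.
  by rewrite big_ord0 => /eqP; rewrite eq_sym oner_eq0.
case: V hV hP hid hcs hB hx => // v V _ hP _ _ _ _ _.
rewrite big_cons ltr_pwDl //.
  by case: (hP v (mem_head _ _)) => b nz; exact: bpoly_gt0.
rewrite big_seq; apply: sumr_ge0 => u uV.
have [b _] := hP u (mem_behead (s:=v::V) uV).
apply: bpoly_ge0 => // i; by case/andP: (ho i) => a c; rewrite !ltW.
Qed.
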